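(* Let $G$ be a finite connected interval graph and $z$ any vertex of $G$. Then $\mathrm{imp}(G)\ge \mathrm{wt}(z)$.
   Context: A finite simple graph $G=(V,E)$ is an interval graph iff there is a representation $\alpha: v\mapsto I_v$ of the vertices by (closed, bounded) intervals of the real line such that $vw\in E$ iff $I_v\cap I_w\neq\emptyset$. For a representation $\alpha$ and a vertex $z$, the impropriety $\mathrm{imp}_\alpha(z)$ is the number of representing intervals $I_w$, $w\neq z$, with $I_w\subseteq I_z$. The impropriety $\mathrm{imp}(\alpha)$ is $\max_z \mathrm{imp}_\alpha(z)$, and $\mathrm{imp}(G)$ is the minimum of $\mathrm{imp}(\alpha)$ over all interval representations $\alpha$ of $G$. A local component at $z$ is a connected component of $G\setminus\{z\}$; it is exterior iff it contains a vertex not adjacent to $z$ (there are at most two exterior local components at any vertex of an interval graph). If $z$ has $n$ local components, the weight $\mathrm{wt}(z)$ is the sum of the $n-2$ smallest orders (numbers of vertices) among the non-exterior local components at $z$ (an empty sum, i.e. $0$, if $n\le 2$). *)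

(* Defs.v *)
From Stdlib Require Import Reals ClassicalEpsilon.
From mathcomp Require Import all_boot.

Set Implicit Arguments.
Unset Strict Implicit.
Unset Printing Implicit Defensive.

Definition pb (P : Prop) : bool :=
  if excluded_middle_informative P then true else false.

(* A closed bounded interval [a,b] of the real line is encoded by its pair
   of endpoints (a,b); it is required that a <= b (see [is_representation]). *)
Definition interval := (R * R)%type.

Definition in_interval (x : R) (I : interval) : Prop :=
  Rle I.1 x /\ Rle x I.2.

Definition intervals_meet (I J : interval) : Prop :=
  exists x : R, in_interval x I /\ in_interval x J.

Definition interval_subset (I J : interval) : Prop :=
  forall x : R, in_interval x I -> in_interval x J.

Definition simple_graph (V : finType) (e : rel V) : Prop :=
  symmetric e /\ irreflexive e.

Definition connected_graph (V : finType) (e : rel V) : Prop :=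
  forall x y : V, connect e x y.

Definition is_representation (V : finType) (e : rel V) (alpha : V -> interval)
  : Prop :=
  (forall v, Rle (alpha v).1 (alpha v).2) /\
  (forall v w, v != w -> (e v w <-> intervals_meet (alpha v) (alpha w))).

Definition is_interval_graph (V : finType) (e : rel V) : Prop :=
  exists alpha : V -> interval, is_representation e alpha.

Definition imp_at (V : finType) (alpha : V -> interval) (z : V) : nat :=
  #|[set w | (w != z) && pb (interval_subset (alpha w) (alpha z))]|.

Definition imp_rep (V : finType) (alpha : V -> interval) : nat :=
  \max_(z : V) imp_at alpha z.

Definition del_rel (V : finType) (e : rel V) (z : V) : rel V :=
  [rel x y | [&& x != z, y != z & e x y]].

Definition local_component (V : finType) (e : rel V) (z x : V) : {set V} :=
  [set y | (y != z) && connect (del_rel e z) x y].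

Definition local_components (V : finType) (e : rel V) (z : V) : {set {set V}} :=
  [set local_component e z x | x in [set~ z]].

Definition exterior (V : finType) (e : rel V) (z : V) (C : {set V}) : bool :=
  [exists y in C, ~~ e z y].

(* wt(z): sum of the (n-2) smallest orders among the non-exterior local
   components, n = number of local components (empty sum if n <= 2). *)
Definition wt (V : finType) (e : rel V) (z : V) : nat :=
  let n := #|local_components e z| in
  let nonext : seq {set V} :=
    [seq C <- enum (local_components e z) | ~~ exterior e z C] in
  let orders := sort leq (map (fun C : {set V} => #|C|) nonext) in
  sumn (take (n - 2) orders).

(* Main.v *)
Require Import Defs.
From Stdlib Require Import Reals Lra ClassicalEpsilon.
From mathcomp Require Import all_boot zify.
Set Implicit Arguments.
Unset Strict Implicit.

Lemma sorted_sum_le (s u w : seq nat) (k : nat) :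
  sorted leq s -> perm_eq s (u ++ w) -> k <= size u -> sumn (take k s) <= sumn u.
Proof.
elim: s u w k => [|x s IH] u w k /=.
  by case: k.
move=> Hs Hp.
case: k => [|k] Hk; first by rewrite take0.
rewrite /=.
have Hs' : sorted leq s by apply: (path_sorted Hs).
have Hall : all (leq x) s by apply: (order_path_min leq_trans Hs).
have xin : x \in u ++ w by rewrite -(perm_mem Hp) mem_head.
case xu: (x \in u).
  have Hu := perm_to_rem xu.
  have Hp2 : perm_eq s (rem x u ++ w).
    rewrite -(perm_cons x); apply: (perm_trans Hp).
    apply/permP => a; move/permP: Hu => Hu; rewrite /= !count_cat Hu /=; lia.
  have Hk2 : k <= size (rem x u).
    by rewrite (perm_size Hu) /= in Hk.
  have := IH _ _ _ Hs' Hp2 Hk2.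
  by rewrite (perm_sumn Hu) /= leq_add2l.
have xw : x \in w by rewrite mem_cat xu in xin.
case: u Hp Hk xu xin => [|y u'] Hp Hk xu xin //=.
have Hw := perm_to_rem xw.
have Hp2 : perm_eq s (u' ++ y :: rem x w).
  rewrite -(perm_cons x); apply: (perm_trans Hp).
  apply/permP => a; move/permP: Hw => Hw; rewrite /= !count_cat Hw /=; lia.
have Hk2 : k <= size u' by [].
have := IH _ _ _ Hs' Hp2 Hk2.
have yin : y \in s by rewrite (perm_mem Hp2) mem_cat mem_head orbT.
have xy : x <= y by move/allP: Hall => /(_ _ yin).
lia.
Qed.

Lemma cover_path (V : finType) (r : rel V) (alpha : V -> interval) :
  (forall x y, r x y -> intervals_meet (alpha x) (alpha y)) ->
  forall x y (p : R), connect r x y -> Rle (alpha x).1 p -> Rle p (alpha y).2 ->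
  exists u, connect r x u /\ in_interval p (alpha u).
Proof.
move=> Hr x y p /connectP [s]; elim: s x => [|a s IH] x /=.
  move=> _ -> H1 H2; exists x; split; [exact: connect0 | by split].
case/andP=> rxa pas ey H1 H2.
destruct (Rle_lt_dec p (alpha x).2) as [h|h].
  exists x; split; [exact: connect0 | by split].
have [q [[q1 q2] [q3 q4]]] := Hr _ _ rxa.
have H1' : Rle (alpha a).1 p by lra.
have [u [cu iu]] := IH a pas ey H1' H2.
exists u; split => //; exact: connect_trans (connect1 rxa) cu.
Qed.

Lemma del_sym (V : finType) (e : rel V) (z : V) :
  symmetric e -> symmetric (del_rel e z).
Proof. by move=> se x y; rewrite /del_rel /= se andbCA. Qed.

Lemma conn_neq (V : finType) (e : rel V) (z x y : V) :
  connect (del_rel e z) x y -> x != z -> y != z.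
Proof.
move/connectP=> [p]; elim: p x => [|a p IH] x /=; first by move=> _ ->.
by case/andP=> /and3P[_ az _] pap ly _; apply: (IH a pap ly az).
Qed.

Lemma comp_share (V : finType) (e : rel V) (z x x' y : V) : symmetric e ->
  y \in local_component e z x -> y \in local_component e z x' ->
  local_component e z x = local_component e z x'.
Proof.
move=> se; rewrite !inE => /andP[_ c1] /andP[_ c2].
have cs := sym_connect_sym (del_sym z se).
have cxx' : connect (del_rel e z) x x' by apply: connect_trans c1 _; rewrite cs.
apply/setP=> t; rewrite !inE; congr andb; apply/idP/idP => H.
  by apply: connect_trans _ H; rewrite cs.
exact: connect_trans cxx' H.
Qed.

Lemma adj_z (V : finType) (e : rel V) (z x : V) : connected_graph e ->
  x != z -> exists c, connect (del_rel e z) x c /\ e c z.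
Proof.
move=> Hc; have := Hc x z; move/connectP=> [p].
elim: p x => [|a p IH] x /=; first by move=> _ ->; rewrite eqxx.
case/andP=> exa pap lz xnz.
case: (eqVneq a z) => [az | anz].
  by exists x; split; [exact: connect0 | rewrite -az].
have [c [cac ecz]] := IH a pap lz anz.
exists c; split => //; apply: connect_trans _ cac; apply: connect1.
by rewrite /del_rel /= xnz anz exa.
Qed.

Lemma pbP (P : Prop) : reflect P (pb P).
Proof. by rewrite /pb; case: excluded_middle_informative => h; constructor. Qed.

Lemma del_meet (V : finType) (e : rel V) (z : V) (alpha : V -> interval) :
  simple_graph e -> is_representation e alpha ->
  forall x y, del_rel e z x y -> intervals_meet (alpha x) (alpha y).
Proof.
move=> [se irr] [_ rep] x y /and3P[_ _ exy].
have nxy : x != y by apply: contraTneq exy => ->; rewrite irr.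
by apply/(rep _ _ nxy).
Qed.

Lemma left_point (V : finType) (e : rel V) (z : V) (alpha : V -> interval) :
  simple_graph e -> connected_graph e -> is_representation e alpha ->
  forall x v, v \in local_component e z x -> Rle (alpha v).1 (alpha z).1 ->
  exists2 u, u \in local_component e z x & in_interval (alpha z).1 (alpha u).
Proof.
move=> sg Hc rep x v; rewrite inE => /andP[vnz cxv] Hv.
have [c [cvc ecz]] := adj_z Hc vnz.
have cnz : c != z by apply: contraTneq ecz => ->; rewrite sg.2.
have [q [[q1 q2] [q3 q4]]] : intervals_meet (alpha c) (alpha z) by apply/(rep.2 _ _ cnz).
have H2 : Rle (alpha z).1 (alpha c).2 by lra.
have [u [cvu iu]] := cover_path (del_meet (z:=z) sg rep) cvc Hv H2.
exists u => //; rewrite inE (conn_neq cvu vnz) /=; exact: connect_trans cxv cvu.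
Qed.

Lemma right_point (V : finType) (e : rel V) (z : V) (alpha : V -> interval) :
  simple_graph e -> connected_graph e -> is_representation e alpha ->
  forall x v, v \in local_component e z x -> Rle (alpha z).2 (alpha v).2 ->
  exists2 u, u \in local_component e z x & in_interval (alpha z).2 (alpha u).
Proof.
move=> sg Hc rep x v; rewrite inE => /andP[vnz cxv] Hv.
have [c [cvc ecz]] := adj_z Hc vnz.
have cnz : c != z by apply: contraTneq ecz => ->; rewrite sg.2.
have [q [[q1 q2] [q3 q4]]] : intervals_meet (alpha c) (alpha z) by apply/(rep.2 _ _ cnz).
have H1 : Rle (alpha c).1 (alpha z).2 by lra.
have cs := sym_connect_sym (del_sym z sg.1).
have ccv : connect (del_rel e z) c v by rewrite cs.
have [u [ccu iu]] := cover_path (del_meet (z:=z) sg rep) ccv H1 Hv.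
exists u => //; rewrite inE (conn_neq ccu cnz) /=.
exact: connect_trans (connect_trans cxv cvc) ccu.
Qed.

Lemma same_point (V : finType) (e : rel V) (z : V) (alpha : V -> interval) :
  simple_graph e -> is_representation e alpha ->
  forall x x' u u' p, u \in local_component e z x -> u' \in local_component e z x' ->
  in_interval p (alpha u) -> in_interval p (alpha u') ->
  local_component e z x = local_component e z x'.
Proof.
move=> sg rep x x' u u' p uC uD iu iu'.
case: (eqVneq u u') => [eq|neq].
  by rewrite eq in uC; apply: comp_share sg.1 uC uD.
have euu : e u u' by apply/(rep.2 _ _ neq); exists p.
move: (uC) (uD); rewrite !inE => /andP[unz cxu] /andP[u'nz _].
have u'C : u' \in local_component e z x.
  rewrite inE u'nz /=; apply: connect_trans cxu (connect1 _).
  by rewrite /del_rel /= unz u'nz euu.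
exact: comp_share sg.1 u'C uD.
Qed.

Lemma comp_mem (V : finType) (e : rel V) (z : V) (C : {set V}) :
  C \in local_components e z -> exists2 x, x != z & C = local_component e z x.
Proof. by case/imsetP => x; rewrite !inE => xz ->; exists x. Qed.

Unset Implicit Arguments.

Theorem theorem2p2 (V : finType) (e : rel V) (z : V) :
  simple_graph e ->
  connected_graph e ->
  is_interval_graph e ->
  forall alpha : V -> interval, is_representation e alpha ->
  wt e z <= imp_rep alpha.
Proof.
move=> sg Hc _ alpha rep.
set S := local_components e z.
pose ins (C : {set V}) := [forall y in C, pb (interval_subset (alpha y) (alpha z))].
pose Ins := [set C in S | ins C].
pose outl (C : {set V}) := [exists y in C, pb (Rlt (alpha y).1 (alpha z).1)].
pose outr (C : {set V}) := [exists y in C, pb (Rlt (alpha z).2 (alpha y).2)].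
pose OutL := [set C in S | outl C].
pose OutR := [set C in S | outr C].
have cOL : #|OutL| <= 1.
  apply/card_le1_eqP => C D; rewrite !inE => /andP[CS oC] /andP[DS oD].
  case/existsP: oC => y /andP[yC /pbP hy].
  case/existsP: oD => y' /andP[yD /pbP hy'].
  have [x xz eC] := comp_mem CS; have [x' x'z eD] := comp_mem DS.
  rewrite eC eD in yC yD *.
  have [u uC iu] := left_point sg Hc rep yC (Rlt_le _ _ hy).
  have [u' uD iu'] := left_point sg Hc rep yD (Rlt_le _ _ hy').
  exact (same_point sg rep uD uC iu' iu).
have cOR : #|OutR| <= 1.
  apply/card_le1_eqP => C D; rewrite !inE => /andP[CS oC] /andP[DS oD].
  case/existsP: oC => y /andP[yC /pbP hy].
  case/existsP: oD => y' /andP[yD /pbP hy'].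
  have [x xz eC] := comp_mem CS; have [x' x'z eD] := comp_mem DS.
  rewrite eC eD in yC yD *.
  have [u uC iu] := right_point sg Hc rep yC (Rlt_le _ _ hy).
  have [u' uD iu'] := right_point sg Hc rep yD (Rlt_le _ _ hy').
  exact (same_point sg rep uD uC iu' iu).
have sub : S :\: Ins \subset OutL :|: OutR.
  apply/subsetP => C; rewrite !inE => /andP[nI CS]; rewrite CS /= in nI *.
  case/forallPn: nI => y; rewrite negb_imply => /andP[yC /pbP ny].
  destruct (Rlt_le_dec (alpha y).1 (alpha z).1) as [h|h].
    by apply/orP; left; apply/existsP; exists y; rewrite yC; apply/pbP.
  destruct (Rlt_le_dec (alpha z).2 (alpha y).2) as [h'|h'].
    by apply/orP; right; apply/existsP; exists y; rewrite yC; apply/pbP.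
  by exfalso; apply: ny => t [t1 t2]; split; lra.
have cnt : #|S| - 2 <= #|Ins|.
  have InsS : Ins \subset S by apply/subsetP => C; rewrite inE => /andP[].
  have := cardsID Ins S; rewrite (setIidPr InsS) => <-.
  have := subset_leq_card sub; rewrite cardsU.
  lia.
have triv : trivIset S.
  apply/trivIsetP => C D CS DS neq.
  rewrite -setI_eq0; apply/eqP/setP => y; rewrite !inE; apply/negbTE/negP.
  case/andP => yC yD.
  have [x xz eC] := comp_mem CS; have [x' x'z eD] := comp_mem DS.
  rewrite eC eD in yC yD neq.
  by rewrite (comp_share sg.1 yC yD) eqxx in neq.
have InsS : Ins \subset S by apply/subsetP => C; rewrite inE => /andP[].
have hImp : \sum_(C in Ins) #|C| <= imp_at alpha z.
  rewrite (eqP (trivIsetS InsS triv)) /imp_at; apply: subset_leq_card.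
  apply/subsetP => y /bigcupP [C CI yC]; move: CI; rewrite [_ \in Ins]inE => /andP[CS insC].
  have [x xz eC] := comp_mem CS.
  rewrite inE; apply/andP; split.
    by move: yC; rewrite eC inE => /andP[].
  by move/forallP: insC => /(_ y); rewrite yC.
have hM : \sum_(C in Ins) #|C| <= imp_rep alpha by apply: (leq_trans hImp); rewrite /imp_rep; exact: leq_bigmax.
apply: (leq_trans _ hM).
have insne : forall C, C \in S -> ins C -> ~~ exterior e z C.
  move=> C CS insC; apply/existsP => -[y /andP[yC ney]].
  have [x xz eC] := comp_mem CS.
  have ynz : y != z by move: yC; rewrite eC inE => /andP[].
  have hs : interval_subset (alpha y) (alpha z).
    by apply/pbP; move/forallP: insC => /(_ y); rewrite yC.
  have zny : z != y by rewrite eq_sym.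
  have : e z y.
    apply/(rep.2 _ _ zny); exists (alpha y).1.
    have hy : in_interval (alpha y).1 (alpha y) by split; [apply: Rle_refl | exact: rep.1].
    by split; [apply: hs | ].
  by rewrite (negbTE ney).
rewrite /wt /=.
set nonext := [seq C <- enum S | ~~ exterior e z C].
have fe : [seq C <- nonext | ins C] = [seq C <- enum S | ins C].
  rewrite /nonext -filter_predI; apply: eq_in_filter => C; rewrite mem_enum => CS /=.
  by case insC: (ins C); rewrite ?andbF // (insne C CS insC).
have Hperm : perm_eq (sort leq (map (fun C : {set V} => #|C|) nonext))
   (map (fun C : {set V} => #|C|) [seq C <- nonext | ins C] ++ map (fun C : {set V} => #|C|) [seq C <- nonext | predC ins C]).
  rewrite perm_sort -map_cat; apply: perm_map; by rewrite perm_sym perm_filterC.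
apply: leq_trans (sorted_sum_le (sort_sorted leq_total _) Hperm _) _.
  rewrite size_map fe -(card_uniqP (filter_uniq _ (enum_uniq _))).
  apply: leq_trans cnt _; rewrite leq_eqVlt; apply/orP; left; apply/eqP.
  apply: eq_card => C; rewrite !inE mem_filter mem_enum andbC //.
rewrite fe sumnE big_map big_filter big_enum_cond.
by apply: eq_leq; apply: eq_bigl => C; rewrite inE.
Qed.
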